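(* Let $A$ be a ring. The Krull valuation spectrum $\mathrm{Spev}(A)$ embeds in $\mathrm{Speh}^m(A)$, and as a subset of $\mathrm{Speh}^m(A)$ it is $$\mathrm{Spev}(A)=\{x\in\mathrm{Speh}^m(A):|2(x)|\le1\}=\{x\in\mathrm{Speh}^m(A):|n(x)|\le1\text{ for all }n\in\mathbb{N}\}.$$
   Context: A halo is a commutative unital semiring with a partial order compatible with $+$ and $\cdot$; an aura is a halo whose semiring is a semifield; positive means $0<1$. A generalized seminorm on a ring $A$ is a map $|\cdot|:A\to R$ into a positive totally ordered aura with $|0|=0,|1|=1$, $|a+b|\le|a|+|b|$, $|ab|\le|a||b|$; multiplicative if $|ab|=|a||b|$; tempered if $R$ has tempered growth (for every non-zero $P\in\mathbb{N}[X]$ and $x\in R$, $x^n\le P(n)$ for all $n$ implies $x\le1$). Two seminorms $|\cdot|_1,|\cdot|_2$ on $A$ are multiplicatively equivalent if for all $a,b,c$: $|a|_1|c|_1\le|b|_1\iff|a|_2|c|_2\le|b|_2$; they are equivalent if $|a|_1\le|b|_1\iff|a|_2\le|b|_2$. A place is a multiplicative equivalence class of seminorms; $\mathrm{Speh}^m(A)$ is the set of tempered multiplicative places, and for $x$ a place, $|a(x)|$ denotes $|a|$ for a chosen representative. For a totally ordered group $\Gamma$, $R_\Gamma=\{0\}\cup\Gamma$ with $0$ smallest and absorbing and $a+b=\max(a,b)$. $\mathrm{Spev}(A)$ is the set of equivalence classes of Krull valuations, i.e. multiplicative seminorms $A\to R_\Gamma$. *)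

(* Defs.v *)
From Stdlib Require Import ClassicalEpsilon.
From mathcomp Require Import all_boot all_algebra.
Set Implicit Arguments. Unset Strict Implicit. Unset Printing Implicit Defensive.
Import GRing.Theory.
Local Open Scope ring_scope.

Record auraOps := AuraOps {
  acar :> Type;
  a0 : acar;
  a1 : acar;
  aadd : acar -> acar -> acar;
  amul : acar -> acar -> acar;
  ale : acar -> acar -> Prop }.

Section Aura.
Variable R : auraOps.
Local Notation "x +' y" := (aadd x y) (at level 50, left associativity).
Local Notation "x *' y" := (amul x y) (at level 40, left associativity).
Local Notation "x <=' y" := (ale x y) (at level 70).

Definition is_halo : Prop :=
  (forall x y z : R, x +' (y +' z) = (x +' y) +' z) /\
      (forall x y : R, x +' y = y +' x) /\
      (forall x : R, a0 R +' x = x) /\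
      (forall x y z : R, x *' (y *' z) = (x *' y) *' z) /\
      (forall x y : R, x *' y = y *' x) /\
      (forall x : R, a1 R *' x = x) /\
      (forall x y z : R, x *' (y +' z) = (x *' y) +' (x *' z)) /\
      (forall x : R, a0 R *' x = a0 R) /\
      ((forall x : R, x <=' x) /\
       (forall x y : R, x <=' y -> y <=' x -> x = y) /\
       (forall x y z : R, x <=' y -> y <=' z -> x <=' z) /\
       (forall x y z : R, x <=' y -> x +' z <=' y +' z) /\
       (forall x y z : R, x <=' y -> x *' z <=' y *' z)).

Definition is_aura : Prop :=
  is_halo /\ forall x : R, x <> a0 R -> exists y : R, x *' y = a1 R.

Definition is_positive : Prop := a0 R <=' a1 R /\ a0 R <> a1 R.

Definition is_totally_ordered : Prop := forall x y : R, x <=' y \/ y <=' x.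

Fixpoint natR (n : nat) : R :=
  match n with O => a0 R | S m => natR m +' a1 R end.

Fixpoint powR (x : R) (n : nat) : R :=
  match n with O => a1 R | S m => powR x m *' x end.

(* tempered growth; P(n) for P in N[X] is computed in N and mapped to R *)
Definition tempered_growth : Prop :=
  forall (P : {poly nat}) (x : R), P != 0 ->
    (forall n : nat, powR x n <=' natR P.[n]) -> x <=' a1 R.

Definition pt_aura : Prop := [/\ is_aura, is_positive & is_totally_ordered].
End Aura.

Section Seminorm.
Variable A : comPzRingType.

Definition gseminorm (R : auraOps) (f : A -> R) : Prop :=
  [/\ pt_aura R, f 0 = a0 R, f 1 = a1 R,
      (forall a b, ale (f (a + b)) (aadd (f a) (f b))) &
      (forall a b, ale (f (a * b)) (amul (f a) (f b)))].

Definition multiplicative (R : auraOps) (f : A -> R) : Prop :=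
  forall a b, f (a * b) = amul (f a) (f b).

(* representative of a point of Speh^m(A) *)
Definition tempered_mult_seminorm (R : auraOps) (f : A -> R) : Prop :=
  [/\ gseminorm f, multiplicative f & tempered_growth R].

Definition mult_equiv (R1 R2 : auraOps) (f1 : A -> R1) (f2 : A -> R2) : Prop :=
  forall a b c, ale (amul (f1 a) (f1 c)) (f1 b) <-> ale (amul (f2 a) (f2 c)) (f2 b).

Definition seminorm_equiv (R1 R2 : auraOps) (f1 : A -> R1) (f2 : A -> R2) : Prop :=
  forall a b, ale (f1 a) (f1 b) <-> ale (f2 a) (f2 b).
End Seminorm.

Record groupOps := GroupOps {
  gcar :> Type;
  g1 : gcar;
  gmul : gcar -> gcar -> gcar;
  ginv : gcar -> gcar;
  gle : gcar -> gcar -> Prop }.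

Definition is_tot_ord_group (G : groupOps) : Prop :=
  (forall x y z : G, gmul x (gmul y z) = gmul (gmul x y) z) /\
  (forall x y : G, gmul x y = gmul y x) /\
  (forall x : G, gmul (g1 G) x = x) /\
  (forall x : G, gmul (ginv x) x = g1 G) /\
  (forall x : G, gle x x) /\
  (forall x y : G, gle x y -> gle y x -> x = y) /\
  (forall x y z : G, gle x y -> gle y z -> gle x z) /\
  (forall x y : G, gle x y \/ gle y x) /\
  (forall x y z : G, gle x y -> gle (gmul x z) (gmul y z)).

Section RGamma.
Variable G : groupOps.
(* R_Γ = {0} ∪ Γ, with None playing the role of 0 *)
Definition rg_le (x y : option G) : Prop :=
  match x, y with
  | None, _ => True
  | Some _, None => False
  | Some a, Some b => gle a b
  end.
Definition rg_add (x y : option G) : option G :=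
  match x, y with
  | None, _ => y
  | _, None => x
  | Some a, Some b => if excluded_middle_informative (gle a b) then y else x
  end.
Definition rg_mul (x y : option G) : option G :=
  match x, y with
  | Some a, Some b => Some (gmul a b)
  | _, _ => None
  end.
Definition RGamma : auraOps :=
  @AuraOps (option G) None (Some (g1 G)) rg_add rg_mul rg_le.
End RGamma.

(* representative of a point of Spev(A): a Krull valuation *)
Definition krull_valuation (A : comPzRingType) (G : groupOps) (v : A -> RGamma G) : Prop :=
  [/\ is_tot_ord_group G, gseminorm v & multiplicative v].

(* Main.v *)
Require Import Defs.
From Stdlib Require Import ClassicalEpsilon ProofIrrelevance.
From mathcomp Require Import all_boot all_algebra.
Set Implicit Arguments. Unset Strict Implicit. Unset Printing Implicit Defensive.
Import GRing.Theory.
Local Open Scope ring_scope.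


Section RG.
Variable G : groupOps.
Hypothesis HG : is_tot_ord_group G.

Ltac grp := move: HG => [h1 [h2 [h3 [h4 [h5 [h6 [h7 [h8 h9]]]]]]]].
Lemma gA (x y z : G) : gmul x (gmul y z) = gmul (gmul x y) z. Proof. grp; exact: h1. Qed.
Lemma gC (x y : G) : gmul x y = gmul y x. Proof. grp; exact: h2. Qed.
Lemma g1l (x : G) : gmul (g1 G) x = x. Proof. grp; exact: h3. Qed.
Lemma g1r (x : G) : gmul x (g1 G) = x. Proof. by rewrite gC g1l. Qed.
Lemma ginvl (x : G) : gmul (ginv x) x = g1 G. Proof. grp; exact: h4. Qed.
Lemma gref (x : G) : gle x x. Proof. grp; exact: h5. Qed.
Lemma ganti (x y : G) : gle x y -> gle y x -> x = y. Proof. grp; exact: h6. Qed.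
Lemma gtrans (x y z : G) : gle x y -> gle y z -> gle x z. Proof. grp; exact: h7. Qed.
Lemma gtot (x y : G) : gle x y \/ gle y x. Proof. grp; exact: h8. Qed.
Lemma gcomp (x y z : G) : gle x y -> gle (gmul x z) (gmul y z). Proof. grp; exact: h9. Qed.
Lemma gcompl (x y z : G) : gle x y -> gle (gmul z x) (gmul z y).
Proof. by move=> h; rewrite ![gmul z _]gC; apply: gcomp. Qed.
Lemma gcompl_inv (x y z : G) : gle (gmul z x) (gmul z y) -> gle x y.
Proof.
move=> h; have := gcompl (ginv z) h; by rewrite !gA ginvl !g1l.
Qed.

Inductive ngle (x y : G) : Prop := ng : ~ gle x y -> ngle x y.

Ltac dem := repeat (match goal with
 | |- context [excluded_middle_informative ?P] => destruct (excluded_middle_informative P)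
 end; simpl in * ).
Ltac negs := repeat match goal with
 | H : ~ gle ?x ?y |- _ =>
    let h := fresh "hn" in
    (have h : gle y x by (case: (gtot x y) => // ?; exfalso; apply: H));
    have := ng H; clear H; move=> H
 end.
Ltac lec := first [ assumption | apply: gref
  | (apply: gtrans; [eassumption| first [assumption | (apply: gtrans; [eassumption|assumption])]]) ].
Ltac closeg := first [ reflexivity
  | (exfalso; match goal with H : ngle ?x ?y |- _ => case: H; by lec end)
  | (congr Some; apply: ganti; by lec) ].

Ltac rgs := dem; negs; try closeg.

Lemma rg_addA (x y z : option G) : rg_add x (rg_add y z) = rg_add (rg_add x y) z.
Proof. case: x => [a|]; case: y => [b|]; case: z => [c|] //=; rgs. Qed.
Lemma rg_addC (x y : option G) : rg_add x y = rg_add y x.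
Proof. case: x => [a|]; case: y => [b|] //=; rgs. Qed.
Lemma rg_mulD (x y z : option G) : rg_mul x (rg_add y z) = rg_add (rg_mul x y) (rg_mul x z).
Proof.
case: x => [a|]; case: y => [b|]; case: z => [c|] //=; dem => //.
all: try (case: n; exact: gcompl).
case: n; exact: gcompl_inv g.
Qed.

Lemma rg_leD (x y z : option G) : rg_le x y -> rg_le (rg_add x z) (rg_add y z).
Proof.
case: x => [a|]; case: y => [b|]; case: z => [c|] //=; dem; negs => //; move=> *; try lec.
Qed.

Lemma rg_pt : pt_aura (RGamma G).
Proof.
split.
- split; last first.
    case=> [a|] // _; exists (Some (ginv a)) => /=; by rewrite gC ginvl.
  split; first exact: rg_addA.
  split; first exact: rg_addC.
  split; first by case.
  split; first by case=> [a|]; case=> [b|]; case=> [c|] //=; rewrite gA.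
  split; first by case=> [a|]; case=> [b|] //=; rewrite gC.
  split; first by case=> [a|] //=; rewrite g1l.
  split; first exact: rg_mulD.
  split; first by case.
  split; first by case=> [a|] //=; apply: gref.
  split; first by case=> [a|]; case=> [b|] //= h1 h2; congr Some; apply: ganti.
  split; first by case=> [a|]; case=> [b|]; case=> [c|] //=; apply: gtrans.
  split; first exact: rg_leD.
  case=> [a|]; case=> [b|]; case=> [c|] //=; apply: gcomp.
- split => //=.
- case=> [a|]; case=> [b|] /=; auto; apply: gtot.
Qed.
End RG.


Section RF.
Variable R : auraOps.
Hypothesis HR : pt_aura R.
Local Notation "x +' y" := (aadd x y) (at level 50, left associativity).
Local Notation "x *' y" := (amul x y) (at level 40, left associativity).
Local Notation "x <=' y" := (ale x y) (at level 70).
Local Notation "0'" := (a0 R).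
Local Notation "1'" := (a1 R).

Lemma Rhalo : is_halo R. Proof. by case: HR => [[]]. Qed.
Ltac halo := move: Rhalo => [h1 [h2 [h3 [h4 [h5 [h6 [h7 [h8 [h9 [h10 [h11 [h12 h13]]]]]]]]]]]].
Lemma addA (x y z : R) : x +' (y +' z) = (x +' y) +' z. Proof. halo; exact: h1. Qed.
Lemma addC (x y : R) : x +' y = y +' x. Proof. halo; exact: h2. Qed.
Lemma add0 (x : R) : 0' +' x = x. Proof. halo; exact: h3. Qed.
Lemma addr0 (x : R) : x +' 0' = x. Proof. by rewrite addC add0. Qed.
Lemma mulA (x y z : R) : x *' (y *' z) = (x *' y) *' z. Proof. halo; exact: h4. Qed.
Lemma mulC (x y : R) : x *' y = y *' x. Proof. halo; exact: h5. Qed.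
Lemma mul1 (x : R) : 1' *' x = x. Proof. halo; exact: h6. Qed.
Lemma mulr1' (x : R) : x *' 1' = x. Proof. by rewrite mulC mul1. Qed.
Lemma mulD (x y z : R) : x *' (y +' z) = x *' y +' x *' z. Proof. halo; exact: h7. Qed.
Lemma mulDl (x y z : R) : (y +' z) *' x = y *' x +' z *' x.
Proof. by rewrite mulC mulD !(mulC x). Qed.
Lemma mul0 (x : R) : 0' *' x = 0'. Proof. halo; exact: h8. Qed.
Lemma mulr0' (x : R) : x *' 0' = 0'. Proof. by rewrite mulC mul0. Qed.
Lemma lerefl (x : R) : x <=' x. Proof. halo; exact: h9. Qed.
Lemma leanti (x y : R) : x <=' y -> y <=' x -> x = y. Proof. halo; exact: h10. Qed.
Lemma letr (x y z : R) : x <=' y -> y <=' z -> x <=' z. Proof. halo; exact: h11. Qed.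
Lemma leD (x y z : R) : x <=' y -> x +' z <=' y +' z. Proof. halo; exact: h12. Qed.
Lemma leM (x y z : R) : x <=' y -> x *' z <=' y *' z. Proof. halo; exact: h13. Qed.
Lemma leDl (x y z : R) : x <=' y -> z +' x <=' z +' y.
Proof. by move=> h; rewrite !(addC z); apply: leD. Qed.
Lemma leMl (x y z : R) : x <=' y -> z *' x <=' z *' y.
Proof. by move=> h; rewrite !(mulC z); apply: leM. Qed.
Lemma leD2 (x y z w : R) : x <=' y -> z <=' w -> x +' z <=' y +' w.
Proof. move=> h h'; apply: letr (leD _ h) (leDl _ h'). Qed.
Lemma leM2 (x y z w : R) : x <=' y -> z <=' w -> x *' z <=' y *' w.
Proof. move=> h h'; apply: letr (leM _ h) (leMl _ h'). Qed.
Lemma le01 : 0' <=' 1'. Proof. by case: HR => _ []. Qed.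
Lemma ne01 : 0' <> 1'. Proof. by case: HR => _ []. Qed.
Lemma letot (x y : R) : x <=' y \/ y <=' x. Proof. by case: HR => _ _; apply. Qed.
Lemma le0x (x : R) : 0' <=' x.
Proof. by have := leM x le01; rewrite mul0 mul1. Qed.
Lemma inv_ex (x : R) : x <> 0' -> exists y, x *' y = 1'.
Proof. by case: HR => [[_ h]] _ _; apply: h. Qed.
Lemma mul_neq0 (x y : R) : x <> 0' -> y <> 0' -> x *' y <> 0'.
Proof.
move=> hx hy hxy; case: (inv_ex hx) => z hz; apply: hy.
by rewrite -[y]mul1 -hz (mulC x) -mulA hxy mulr0'.
Qed.
Lemma lex0 (x : R) : x <=' 0' -> x = 0'.
Proof. move=> h; apply: leanti h (le0x _). Qed.

Lemma natR_le (m n : nat) : (m <= n)%N -> natR R m <=' natR R n.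
Proof.
elim: n => [|n IH]; first by rewrite leqn0 => /eqP ->; apply: lerefl.
rewrite leq_eqVlt => /orP [/eqP -> | h]; first exact: lerefl.
apply: letr (IH h) _ => /=; rewrite -{1}[natR R n]addr0; apply: leDl; exact: le01.
Qed.
Lemma natR_add (m n : nat) : natR R (m + n) = natR R m +' natR R n.
Proof. elim: n => [|n IH] /=; first by rewrite addn0 addr0. by rewrite addnS /= IH addA. Qed.

Lemma powR_mul (x y : R) n : powR (x *' y) n = powR x n *' powR y n.
Proof.
elim: n => [|n IH] /=; first by rewrite mul1.
rewrite IH -!mulA; congr amul; rewrite !mulA; congr amul; by rewrite mulC.
Qed.
Lemma powR_add (x : R) m n : powR x (m + n) = powR x m *' powR x n.
Proof. elim: n => [|n IH] /=; first by rewrite addn0 mulr1'. by rewrite addnS /= IH mulA. Qed.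
Lemma powR1 n : powR (1') n = 1'.
Proof. elim: n => [|n IH] //=; by rewrite IH mul1. Qed.
Lemma powR_le (x y : R) n : x <=' y -> powR x n <=' powR y n.
Proof. move=> h; elim: n => [|n IH] /=; [exact: lerefl | exact: leM2]. Qed.
End RF.


Section Norm.
Variable R : auraOps.
Variable A : comPzRingType.
Variable f : A -> R.
Hypothesis Hf : tempered_mult_seminorm f.
Local Notation "x +' y" := (aadd x y) (at level 50, left associativity).
Local Notation "x *' y" := (amul x y) (at level 40, left associativity).
Local Notation "x <=' y" := (ale x y) (at level 70).
Local Notation "0'" := (a0 R).
Local Notation "1'" := (a1 R).

Lemma HRf : pt_aura R. Proof. by case: Hf => [[]]. Qed.
Lemma f0 : f 0 = 0'. Proof. by case: Hf => [[]]. Qed.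
Lemma f1 : f 1 = 1'. Proof. by case: Hf => [[]]. Qed.
Lemma fD a b : f (a + b) <=' f a +' f b. Proof. by case: Hf => [[]]. Qed.
Lemma fM a b : f (a * b) = f a *' f b. Proof. by case: Hf. Qed.
Lemma ftemp : tempered_growth R. Proof. by case: Hf. Qed.
Lemma fX a n : f (a ^+ n) = powR (f a) n.
Proof. elim: n => [|n IH] /=; first by rewrite expr0 f1. by rewrite exprSr fM IH. Qed.

Lemma fbits : f 2%:R <=' 1' -> forall k m, (m < 2 ^ k)%N -> f m%:R <=' natR R k.
Proof.
move=> h2; elim=> [|k IH] m hm.
  have -> : m = 0%N by rewrite expn0 ltnS leqn0 in hm; apply/eqP.
  rewrite f0 /=.
exact: (lerefl HRf).
rewrite (divn_eq m 2) natrD natrM.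
apply: (letr HRf (fD _ _)) => /=; apply: (leD2 HRf).
  rewrite fM -[natR R k](mulr1' HRf); apply: (leM2 HRf _ h2); apply: IH.
  rewrite ltn_divLR //; by rewrite -expnSr.
have : (m %% 2 < 2)%N by rewrite ltn_mod.
case: (m %% 2)%N => [|[|//]] _; last by rewrite f1; apply: (lerefl HRf).
by rewrite f0; apply: (le01 HRf).
Qed.

Lemma fnat : f 2%:R <=' 1' -> forall n, f n%:R <=' 1'.
Proof.
move=> h2 n; apply: (ftemp (P := n%:P * 'X + 1%:P)).
  apply/eqP => /(congr1 (fun p => p.[0%N])); rewrite hornerMXaddC hornerC.
  by rewrite horner0 mulr0 add0r.
move=> k; rewrite -fX -natrX hornerMXaddC hornerC.
apply: (fbits h2).
change (n ^ k < 2 ^ (n * k + 1))%N; rewrite addn1.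
have h1 : (n ^ k <= 2 ^ (n * k))%N.
  rewrite expnM; case: k => [|k]; first by rewrite !expn0.
  by rewrite leq_exp2r //; apply: ltnW; apply: ltn_expl.
apply: (leq_ltn_trans h1).
by rewrite expnS mul2n -addnn -{1}[(2 ^ (n * k))%N]addn0 ltn_add2l expn_gt0.
Qed.

Lemma fsum B m (F : 'I_m -> A) : (forall i, f (F i) <=' B) ->
  f (\sum_(i < m) F i) <=' natR R m *' B.
Proof.
elim: m F => [|m IH] F hF.
  by rewrite big_ord0 f0 /= (mul0 HRf); apply: (lerefl HRf).
rewrite big_ord_recr /=; apply: (letr HRf (fD _ _)).
rewrite (mulDl HRf) (mul1 HRf); apply: (leD2 HRf) => //; exact: IH.
Qed.

Lemma fnatmul (x : A) k : f 2%:R <=' 1' -> f (x *+ k) <=' f x.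
Proof.
move=> h2; rewrite -mulr_natr fM -{2}[f x](mulr1' HRf); apply: (leMl HRf); exact: fnat.
Qed.

Lemma nonarch : f 2%:R <=' 1' -> forall a b, f a <=' f b -> f (a + b) <=' f b.
Proof.
move=> h2 a b hab.
have [hb0|hb0] := classic (f b = 0').
  have ha0 : f a = 0' by apply: (lex0 HRf); rewrite -hb0.
  apply: (letr HRf (fD _ _)); rewrite ha0 hb0 (add0 HRf); exact: (lerefl HRf).
case: (inv_ex HRf hb0) => bi hbi.
have hy : f (a + b) *' bi <=' 1'.
  apply: (ftemp (P := 1%:P * 'X + 1%:P)).
    apply/eqP => /(congr1 (fun p => p.[0%N])); rewrite hornerMXaddC hornerC.
    by rewrite horner0 mulr0 add0r.
  move=> n; rewrite hornerMXaddC hornerC mul1r (powR_mul HRf) -fX exprDn.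
  apply: (letr HRf (leM HRf _ (fsum (B := powR (f b) n) _))).
    move=> i; apply: (letr HRf (fnatmul _ _ h2)).
    rewrite fM !fX.
    have hi : (i <= n)%N by rewrite -ltnS.
    have -> : powR (f b) n = powR (f b) (n - i) *' powR (f b) i.
      by rewrite -(powR_add HRf) subnK.
    apply: (leM2 HRf); [exact: (powR_le HRf _ hab) | exact: (lerefl HRf)].
  rewrite -(mulA HRf) -(powR_mul HRf) hbi (powR1 HRf) (mulr1' HRf).
  change (natR R n.+1 <=' natR R (n + 1)%N); rewrite addn1; exact: (lerefl HRf).
have -> : f (a + b) = (f (a + b) *' bi) *' f b.
  by rewrite -(mulA HRf) (mulC HRf bi) hbi (mulr1' HRf).
apply: (letr HRf (leM HRf _ hy)); rewrite (mul1 HRf); exact: (lerefl HRf).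
Qed.
End Norm.


Section Build.
Variable R : auraOps.
Hypothesis HR : pt_aura R.

Definition nzR := {x : R | x <> a0 R}.
Definition nzmul (x y : nzR) : nzR :=
  exist _ (amul (sval x) (sval y)) (mul_neq0 HR (svalP x) (svalP y)).
Lemma one_nz : a1 R <> a0 R. Proof. by move=> h; apply: (ne01 HR). Qed.
Lemma inv_nz (x y : R) : amul x y = a1 R -> y <> a0 R.
Proof. by move=> h hy; apply: (ne01 HR); rewrite -h hy (mulr0' HR). Qed.
Definition nzinv (x : nzR) : nzR :=
  let s := constructive_indefinite_description _ (inv_ex HR (svalP x)) in
  exist _ (sval s) (inv_nz (svalP s)).
Lemma nzinvP (x : nzR) : amul (sval (nzinv x)) (sval x) = a1 R.
Proof.
rewrite /nzinv /=; case: (constructive_indefinite_description _ _) => y hy /=.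
by rewrite (mulC HR).
Qed.
Definition Gnz : groupOps :=
  @GroupOps nzR (exist _ (a1 R) one_nz) nzmul nzinv (fun x y => ale (sval x) (sval y)).

Lemma nz_eq (x y : nzR) : sval x = sval y -> x = y.
Proof.
case: x => x hx; case: y => y hy /= e; subst y; congr exist; exact: proof_irrelevance.
Qed.

Lemma Gnz_grp : is_tot_ord_group Gnz.
Proof.
split; first by move=> x y z; apply: nz_eq => /=; rewrite (mulA HR).
split; first by move=> x y; apply: nz_eq => /=; rewrite (mulC HR).
split; first by move=> x; apply: nz_eq => /=; rewrite (mul1 HR).
split; first by move=> x; apply: nz_eq => /=; rewrite nzinvP.
split; first by move=> x; exact: (lerefl HR).
split; first by move=> x y h1 h2; apply: nz_eq; exact: (leanti HR).
split; first by move=> x y z; exact: (letr HR).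
split; first by move=> x y; exact: (letot HR).
by move=> x y z /= h; exact: (leM HR).
Qed.

Definition valo (o : option Gnz) : R :=
  match o with Some x => sval x | None => a0 R end.

Lemma valo_inj (x y : option Gnz) : valo x = valo y -> x = y.
Proof.
case: x => [x|]; case: y => [y|] //= e.
- by congr Some; apply: nz_eq.
- by case: (svalP x).
- by case: (svalP y).
Qed.

Lemma valo_le (x y : option Gnz) : rg_le x y <-> ale (valo x) (valo y).
Proof.
case: x => [x|]; case: y => [y|] /=; split => //.
- move=> h; case: (svalP x); exact: (lex0 HR).
- move=> _; exact: (le0x HR).
- move=> _; exact: (le0x HR).
Qed.

Lemma valo_mul (x y : option Gnz) : valo (rg_mul x y) = amul (valo x) (valo y).
Proof.
case: x => [x|]; case: y => [y|] //=; by rewrite ?(mul0 HR) ?(mulr0' HR).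
Qed.

Lemma valo_ub (x y : option Gnz) :
  ale (valo x) (valo (rg_add x y)) /\ ale (valo y) (valo (rg_add x y)).
Proof.
case: x => [x|]; case: y => [y|] /=.
- case: excluded_middle_informative => /= h; first by split => //; exact: (lerefl HR).
  split; first exact: (lerefl HR).
  by case: (letot HR (sval x) (sval y)).
- split; [exact: (lerefl HR) | exact: (le0x HR)].
- split; [exact: (le0x HR) | exact: (lerefl HR)].
- split; exact: (lerefl HR).
Qed.

Variable A : comPzRingType.
Variable f : A -> R.

Definition vf (a : A) : option Gnz :=
  match excluded_middle_informative (f a = a0 R) with
  | left _ => None
  | right h => Some (exist _ (f a) h)
  end.

Lemma valo_vf a : valo (vf a) = f a.
Proof. by rewrite /vf; case: excluded_middle_informative. Qed.

End Build.


Lemma nat_poly_pos (P : {poly nat}) : P != 0 -> (0 < P.[1%N])%N.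
Proof.
elim/poly_ind: P => [|p c IH]; first by rewrite eqxx.
rewrite hornerMXaddC mulr1.
have [->|hp] := eqVneq p 0.
  rewrite mul0r add0r horner0 polyC_eq0 => hc; rewrite add0r.
  by rewrite lt0n.
move=> _; have := IH hp.
by move=> h; apply: leq_trans h (leq_addr _ _).
Qed.

Lemma natR_RG (G : groupOps) (k : nat) : (0 < k)%N -> natR (RGamma G) k = Some (g1 G).
Proof.
elim: k => [|k IH] // _.
case: k IH => [|k] IH; first done.
change (rg_add (natR (RGamma G) k.+1) (Some (g1 G)) = Some (g1 G)).
by rewrite IH //=; case: excluded_middle_informative.
Qed.

Theorem lemma3p6 (A : comPzRingType) :
  (forall (G : groupOps) (v : A -> RGamma G),
      krull_valuation v -> tempered_mult_seminorm v) /\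
  (forall (G1 G2 : groupOps) (v1 : A -> RGamma G1) (v2 : A -> RGamma G2),
      krull_valuation v1 -> krull_valuation v2 ->
      (seminorm_equiv v1 v2 <-> mult_equiv v1 v2)) /\
  (forall (R : auraOps) (f : A -> R), tempered_mult_seminorm f ->
      ((exists (G : groupOps) (v : A -> RGamma G),
           krull_valuation v /\ mult_equiv f v)
         <-> ale (f 2%:R) (a1 R)) /\
      (ale (f 2%:R) (a1 R) <-> (forall n : nat, ale (f n%:R) (a1 R)))).
Proof.
split.
  move=> G v [HG Hs Hm]; split => //.
  move=> P x hP hx; have := hx 1%N.
  rewrite (natR_RG G (nat_poly_pos hP)).
  case: x {hx} => [a|] //=; by rewrite g1l.
split.
  move=> G1 G2 v1 v2 [HG1 [_ _ e1 _ _] m1] [HG2 [_ _ e2 _ _] m2]; split.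
    move=> h a b c; by rewrite -m1 -m2.
  move=> h a b; have := h a b 1; rewrite e1 e2.
  case: (v1 a) => [x|]; case: (v2 a) => [y|] //=; by rewrite !g1r.
move=> R f Hf; have HR := HRf Hf.
have H2 : ale (f 2%:R) (a1 R) <-> (forall n : nat, ale (f n%:R) (a1 R)).
  split; [exact: fnat | by apply].
split => //.
split.
  case=> G [v [[HG [_ v0 v1 vD _] vm] he]].
  have [_ hh] := he 2%:R 1 1; rewrite (f1 Hf) (mulr1' HR) in hh; apply: hh; rewrite v1.
  have := vD 1 1; rewrite v1.
  change (2%:R : A) with (1 + 1 : A).
  case: (v (1 + 1)) => [g|] //=.
  by case: (excluded_middle_informative _) => /= _ h; rewrite g1r.
move=> h2.
exists (Gnz HR), (vf HR f); split.
  split; first exact: Gnz_grp.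
  split.
  - exact: rg_pt (Gnz_grp HR).
  - by apply: valo_inj; rewrite valo_vf (f0 Hf).
  - by apply: valo_inj; rewrite valo_vf (f1 Hf).
  - move=> a b; apply/valo_le; rewrite !valo_vf.
    have [ub1 ub2] := valo_ub (vf HR f a) (vf HR f b); rewrite !valo_vf in ub1 ub2.
    case: (letot HR (f a) (f b)) => hab.
      exact: (letr HR (nonarch Hf h2 hab)).
    rewrite addrC; exact: (letr HR (nonarch Hf h2 hab)).
  - move=> a b; apply/valo_le; rewrite valo_mul !valo_vf (fM Hf); exact: (lerefl HR).
  move=> a b; apply: valo_inj; by rewrite valo_mul !valo_vf (fM Hf).
move=> a b c; split.
  by move=> h; apply/valo_le; rewrite valo_mul !valo_vf.
by move/valo_le; rewrite valo_mul !valo_vf.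
Qed.
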